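(* Fix an integer $t\ge 1$ and let $(\rho,y)$ be the principal eigenpair of the $t$-pleated bowtie $B_t$. Then the set of vertices of spectral rank 1 in $B_t$ (i.e. the vertices $v$ at which $y_v$ attains its maximum) is exactly $\{r_1,r_2\}$ if and only if \[ t<\rho\sqrt{\rho-1}-1 . \]
   Context: For a connected $k$-uniform hypergraph $H=([n],E)$ and $x\in\mathbb{R}^n$, write $x^e=\prod_{v\in e}x_v$ and $F_H(x)=k\sum_{e\in E}x^e$. The principal eigenpair $(\rho,y)$ of $H$ is the unique pair with $y$ strictly positive, $\|y\|_k=1$, satisfying $\rho\, y_i^{k-1}=\sum_{e\in E,\, i\in e} y^{e\setminus\{i\}}$ for all $i$; equivalently $\rho=\max_{\|z\|_k^k=1}F_H(z)$ with $y$ the unique positive maximizer. The $t$-pleated bowtie $B_t$ is the $3$-uniform hypergraph on the $2t+5$ vertices $c,\ell_1,\dots,\ell_{t+2},r_1,\dots,r_{t+2}$ with edge set \[ \{\{c,r_1,r_2\}\}\cup\{\{c,\ell_1,\ell_j\}: 2\le j\le t+2\}\cup\{\{r_1,r_2,r_j\}: 3\le j\le t+2\}, \] so $\{c,\ell_1\}$ lies in $t+1$ edges and $\{r_1,r_2\}$ lies in $t+1$ edges. The spectral rank of a vertex is its position when vertices are ordered by decreasing value of the principal eigenvector (tied vertices share a rank); spectral rank 1 vertices are those with the largest entry. *)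

(* Defs.v *)
From HB Require Import structures.
From mathcomp Require Import all_boot all_order all_algebra.
From mathcomp Require Import reals.
Set Implicit Arguments. Unset Strict Implicit. Unset Printing Implicit Defensive.
Import Order.TTheory GRing.Theory Num.Theory.
Local Open Scope ring_scope.

(* A k-uniform hypergraph on a finite vertex type V is given by its edge set
   E : {set {set V}} (each edge a k-element set).  For x : V -> R,
   x^e = \prod_(v in e) x v. *)

(* For a connected hypergraph this pair is unique. *)
Definition principal_eigenpair (R : realType) (V : finType) (k : nat)
  (E : {set {set V}}) (rho : R) (y : V -> R) : Prop :=
  [/\ forall v, 0 < y v,
      \sum_(v : V) y v ^+ k = 1 &
      forall i : V, rho * y i ^+ k.-1 =
        \sum_(e in E | i \in e) \prod_(v in e | v != i) y v].

(* Vertices of the t-pleated bowtie B_t: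
   c = None, l_j = Some (inl (j-1)), r_j = Some (inr (j-1)) for 1 <= j <= t+2
   (indices are 0-based ordinals of 'I_(t+2)). *)
Definition bowtie_vertex (t : nat) : finType := option ('I_t.+2 + 'I_t.+2)%type.

Definition bc (t : nat) : bowtie_vertex t := None.
Definition bl (t : nat) (j : 'I_t.+2) : bowtie_vertex t := Some (inl j).
Definition br (t : nat) (j : 'I_t.+2) : bowtie_vertex t := Some (inr j).

(* Edge set:  {c,r1,r2} ∪ {{c,l1,lj} : 2<=j<=t+2} ∪ {{r1,r2,rj} : 3<=j<=t+2}
   (with 0-based indices: l1 = bl ord0, r1 = br ord0, r2 = br (inord 1)). *)
Definition bowtie_edges (t : nat) : {set {set bowtie_vertex t}} :=
  [set [set bc t; br ord0; br (inord 1)]]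
  :|: [set [set bc t; bl ord0; bl j] | j : 'I_t.+2 & (0 < val j)%N]
  :|: [set [set br ord0; br (inord 1); br j] | j : 'I_t.+2 & (1 < val j)%N].

Definition spectral_rank1 (V : finType) (R : realType) (y : V -> R) : {set V} :=
  [set v | [forall w, y w <= y v]].

(* Main.v *)
Require Import Defs.
From HB Require Import structures.
From mathcomp Require Import all_boot all_order all_algebra.
From mathcomp Require Import reals.
From mathcomp Require Import ring lra.
Import Order.TTheory GRing.Theory Num.Theory.
Local Open Scope ring_scope.
Set Implicit Arguments. Unset Strict Implicit.

Lemma disjP (T : finType) (A B : {set T}) :
  (forall x, x \in A -> x \in B -> False) -> [disjoint A & B].
Proof. move=> H; rewrite -setI_eq0; apply/eqP/setP => x; rewrite !inE; apply/negP => /andP[]; exact: H. Qed.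

Section S.
Variable t : nat.
Local Notation V := (bowtie_vertex t).
Definition e0 : {set V} := [set bc t; br ord0; br (inord 1)].
Definition el (j : 'I_t.+2) : {set V} := [set bc t; bl ord0; bl j].
Definition er (j : 'I_t.+2) : {set V} := [set br ord0; br (inord 1); br j].

Lemma bl_inj : injective (@bl t). Proof. by move=> j k [->]. Qed.
Lemma br_inj : injective (@br t). Proof. by move=> j k [->]. Qed.
Lemma eq_blbl j k : (bl j == bl k :> V) = (j == k). Proof. by apply/eqP/eqP => [/bl_inj|->]. Qed.
Lemma eq_brbr j k : (br j == br k :> V) = (j == k). Proof. by apply/eqP/eqP => [/br_inj|->]. Qed.
Lemma eq_blbr j k : (bl j == br k :> V) = false. Proof. by []. Qed.
Lemma eq_brbl j k : (br j == bl k :> V) = false. Proof. by []. Qed.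
Lemma eq_blc j : (bl j == bc t :> V) = false. Proof. by []. Qed.
Lemma eq_brc j : (br j == bc t :> V) = false. Proof. by []. Qed.
Lemma eq_cbl j : (bc t == bl j :> V) = false. Proof. by []. Qed.
Lemma eq_cbr j : (bc t == br j :> V) = false. Proof. by []. Qed.
Lemma eq_cc : (bc t == bc t :> V) = true. Proof. by []. Qed.
Definition veqE := (eq_blbl, eq_brbr, eq_blbr, eq_brbl, eq_blc, eq_brc, eq_cbl, eq_cbr, eq_cc).

Lemma o1E : nat_of_ord (inord 1 : 'I_t.+2) = 1%N. Proof. by rewrite inordK. Qed.

Lemma sumU (R : realType) (A B : {set {set V}}) (F : {set V} -> R) :
  [disjoint A & B] -> \sum_(e in A :|: B) F e = \sum_(e in A) F e + \sum_(e in B) F e.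
Proof. move=> d; rewrite -bigU //; apply: eq_bigl => X; by rewrite !inE. Qed.

Lemma sumE (R : realType) i (F : {set V} -> R) :
  \sum_(e in bowtie_edges t | i \in e) F e =
    (if i \in e0 then F e0 else 0)
  + \sum_(j < t.+2 | (0 < j)%N) (if i \in el j then F (el j) else 0)
  + \sum_(j < t.+2 | (1 < j)%N) (if i \in er j then F (er j) else 0).
Proof.
rewrite big_mkcondr /bowtie_edges.
rewrite sumU; last first.
  apply: disjP => e; rewrite !inE => /orP[/eqP-> | /imsetP[j _ ->]] /imsetP[k _ /setP/(_ (bc t))];
  by rewrite !inE !veqE.
rewrite sumU; last first.
  apply: disjP => e; rewrite !inE => /eqP-> /imsetP[k _ /setP/(_ (bl ord0))];
  by rewrite !inE !veqE eqxx.
rewrite big_set1 big_imset; last first.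
  move=> j k; rewrite !inE => Hj Hk /setP/(_ (bl j)); rewrite !inE !veqE eqxx.
  have -> : (j == ord0) = false by apply/eqP => h; rewrite h in Hj.
  by move/esym/eqP.
rewrite big_imset; last first.
  move=> j k; rewrite !inE => Hj Hk /setP/(_ (br j)); rewrite !inE !veqE eqxx.
  have -> : (j == ord0) = false by apply/eqP => h; rewrite h in Hj.
  have -> : (j == inord 1) = false.
    apply/eqP => h; move: Hj; by rewrite h /= inordK.
  by move/esym/eqP.
by congr (_ + _ + _); apply: eq_bigl => j; rewrite inE.
Qed.

Lemma prod3 (R : realType) (a b c i : V) (F : V -> R) :
  a != b -> a != c -> b != c ->
  \prod_(v in [set a; b; c] | v != i) F v =
  (if a != i then F a else 1) * (if b != i then F b else 1) * (if c != i then F c else 1).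
Proof.
move=> ab ac bc; rewrite big_mkcondr -setUA big_setU1 /=; last by rewrite !inE negb_or ab ac.
by rewrite big_setU1 /= ?inE // big_set1 mulrA.
Qed.

Lemma j0 (j : 'I_t.+2) : (0 < j)%N -> (j == ord0) = false /\ (ord0 == j) = false.
Proof. by move=> h; split; apply/eqP => e; move: h; first [rewrite e | rewrite -e]. Qed.
Lemma j1 (j : 'I_t.+2) : (1 < j)%N -> [/\ (j == ord0) = false, (ord0 == j) = false,
   (j == inord 1) = false & (inord 1 == j) = false].
Proof.
move=> h; split; apply/eqP => e; move: h; first [rewrite e | rewrite -e] => //=; rewrite ?inordK //.
Qed.
Lemma o10 : ((inord 1 : 'I_t.+2) == ord0) = false /\ (ord0 == (inord 1 : 'I_t.+2)) = false.
Proof. by split; apply/eqP => e; move: (o1E); first [rewrite e | rewrite -e]. Qed.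

Lemma prod_e0 (R : realType) i (F : V -> R) : \prod_(v in e0 | v != i) F v =
  (if bc t != i then F (bc t) else 1) * (if br ord0 != i then F (br ord0) else 1) *
  (if br (inord 1) != i then F (br (inord 1)) else 1).
Proof. by rewrite prod3 // !veqE; case: o10 => _ ->. Qed.
Lemma prod_el (R : realType) i (j : 'I_t.+2) (F : V -> R) : (0 < j)%N -> \prod_(v in el j | v != i) F v =
  (if bc t != i then F (bc t) else 1) * (if bl ord0 != i then F (bl ord0) else 1) *
  (if bl j != i then F (bl j) else 1).
Proof. move=> h; case: (j0 h) => A B; by rewrite prod3; rewrite ?veqE ?B. Qed.
Lemma prod_er (R : realType) i (j : 'I_t.+2) (F : V -> R) : (1 < j)%N -> \prod_(v in er j | v != i) F v =
  (if br ord0 != i then F (br ord0) else 1) * (if br (inord 1) != i then F (br (inord 1)) else 1) *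
  (if br j != i then F (br j) else 1).
Proof. move=> h; case: (j1 h) => A B C D; case: o10 => E G; by rewrite prod3; rewrite ?veqE ?B ?D ?G. Qed.

Section Eq.
Variables (R : realType) (rho : R) (y : V -> R).
Hypothesis H : forall i, rho * y i ^+ 2 =
  \sum_(e in bowtie_edges t | i \in e) \prod_(v in e | v != i) y v.
Local Notation c := (y (bc t)).
Local Notation a := (y (bl ord0)).
Local Notation r0 := (y (br ord0)).
Local Notation r1 := (y (br (inord 1))).

Lemma eq_c : rho * c ^+ 2 = r0 * r1 + \sum_(j < t.+2 | (0 < j)%N) a * y (bl j).
Proof.
rewrite H sumE prod_e0 /e0 !inE !veqE /=.
rewrite (eq_bigr (fun j => a * y (bl j))); last first.
  by move=> j Hj; rewrite prod_el // /el !inE !veqE /= mul1r.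
rewrite mul1r -[RHS]addr0; congr (_ + _); apply: big1 => j Hj.
by rewrite /er !inE !veqE.
Qed.

Lemma eq_a : rho * a ^+ 2 = \sum_(j < t.+2 | (0 < j)%N) c * y (bl j).
Proof.
rewrite H sumE /e0 !inE !veqE /= add0r.
rewrite (eq_bigr (fun j => c * y (bl j))); last first.
  by move=> j Hj; rewrite prod_el // /el !inE !veqE /=; case: (j0 Hj) => -> _; rewrite mulr1.
rewrite [X in _ + X]big1 ?addr0 // => j Hj.
by rewrite /er !inE !veqE.
Qed.

Lemma eq_l (k : 'I_t.+2) : (0 < k)%N -> rho * y (bl k) ^+ 2 = c * a.
Proof.
move=> Hk; rewrite H sumE /e0 !inE !veqE /= add0r.
rewrite [X in _ + X]big1 ?addr0; last by move=> j Hj; rewrite /er !inE !veqE.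
rewrite (bigD1 k) //= [X in _ + X]big1 ?addr0.
  rewrite prod_el // /el !inE !veqE eqxx /= !orbT /=; case: (j0 Hk) => _ ->.
  by rewrite mulr1.
move=> j /andP[Hj jk]; rewrite /el !inE !veqE; case: (j0 Hk) => -> _ /=.
by rewrite eq_sym (negbTE jk).
Qed.

Lemma eq_r0 : rho * r0 ^+ 2 = c * r1 + \sum_(j < t.+2 | (1 < j)%N) r1 * y (br j).
Proof.
rewrite H sumE prod_e0 /e0 !inE !veqE /=.
rewrite big1 ?addr0; last by move=> j Hj; rewrite /el !inE !veqE.
rewrite (eq_bigr (fun j => r1 * y (br j))); last first.
  move=> j Hj; rewrite prod_er // /er !inE !veqE /=; case: o10 => -> _.
  by case: (j1 Hj) => -> _ _ _; rewrite mul1r.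
by case: o10 => -> _; rewrite mulr1.
Qed.

Lemma eq_r1 : rho * r1 ^+ 2 = c * r0 + \sum_(j < t.+2 | (1 < j)%N) r0 * y (br j).
Proof.
rewrite H sumE prod_e0 /e0 !inE !veqE /=.
rewrite [X in _ + X + _]big1 ?addr0; last by move=> j Hj; rewrite /el !inE !veqE.
rewrite (eq_bigr (fun j => r0 * y (br j))); last first.
  move=> j Hj; rewrite prod_er // /er !inE !veqE /=; case: o10 => _ ->.
  by rewrite eqxx orbT /= mulr1; case: (j1 Hj) => _ _ -> _.
by rewrite eqxx orbT /= mulr1; case: o10 => _ ->.
Qed.

Lemma eq_rk (k : 'I_t.+2) : (1 < k)%N -> rho * y (br k) ^+ 2 = r0 * r1.
Proof.
move=> Hk; rewrite H sumE /e0 !inE !veqE /=.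
case: (j1 Hk) => -> _ -> _ /=; rewrite add0r.
rewrite big1 ?add0r; last by move=> j Hj; rewrite /el !inE !veqE.
rewrite (bigD1 k) //= [X in _ + X]big1 ?addr0.
  rewrite prod_er // /er !inE !veqE eqxx /= !orbT /=; case: (j1 Hk) => _ -> _ ->.
  by rewrite mulr1.
move=> j /andP[Hj jk]; rewrite /er !inE !veqE; case: (j1 Hk) => -> _ -> _ /=.
by rewrite eq_sym (negbTE jk).
Qed.

End Eq.
End S.
Section A.
Variable R : realType.
Variables (rho c a m r s T : R).
Hypotheses (hc : 0 < c) (ha : 0 < a) (hm : 0 < m) (hr : 0 < r) (hs : 0 < s) (hT : 1 <= T) (hrho : 0 < rho).
Hypothesis Hm : rho * m ^+ 2 = c * a.
Hypothesis Hs : rho * s ^+ 2 = r * r.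
Hypothesis Hc : rho * c ^+ 2 = r * r + a * m * (T + 1).
Hypothesis Ha : rho * a ^+ 2 = c * m * (T + 1).
Hypothesis Hr : rho * r ^+ 2 = c * r + r * s * T.

Lemma am : rho ^+ 2 * (a * m) = (T + 1) * c ^+ 2.
Proof.
have h : (a * m) * (rho ^+ 2 * (a * m) - (T + 1) * c ^+ 2) = 0.
  have -> : (a * m) * (rho ^+ 2 * (a * m) - (T + 1) * c ^+ 2) =
     (rho * m ^+ 2) * (rho * a ^+ 2) - (T + 1) * c ^+ 2 * (a * m) by ring.
  rewrite Hm Ha; ring.
move/eqP: h; rewrite mulf_eq0 => /orP[/eqP h|]; first by move: (mulr_gt0 ha hm); rewrite h ltxx.
by rewrite subr_eq0 => /eqP.
Qed.

Lemma key : rho ^+ 2 * r ^+ 2 = c ^+ 2 * (rho ^+ 3 - (T + 1) ^+ 2).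
Proof.
have := am. have := Hc. move=> h1 h2.
have -> : rho ^+ 2 * r ^+ 2 = rho ^+ 2 * (rho * c ^+ 2 - a * m * (T + 1)) by rewrite h1; ring.
have -> : rho ^+ 2 * (rho * c ^+ 2 - a * m * (T + 1)) = rho ^+ 3 * c ^+ 2 - (T + 1) * (rho ^+ 2 * (a * m)) by ring.
rewrite h2; ring.
Qed.

Lemma a3 : rho ^+ 3 * a ^+ 3 = (T + 1) ^+ 2 * c ^+ 3.
Proof.
have h : c * (rho ^+ 3 * a ^+ 3 - (T + 1) ^+ 2 * c ^+ 3) = 0.
  have -> : c * (rho ^+ 3 * a ^+ 3 - (T + 1) ^+ 2 * c ^+ 3) =
    rho ^+ 3 * a ^+ 2 * (c * a) - ((T + 1) * c ^+ 2) ^+ 2 by ring.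
  rewrite -Hm -am; ring.
move/eqP: h; rewrite mulf_eq0 => /orP[/eqP h|]; first by move: hc; rewrite h ltxx.
by rewrite subr_eq0 => /eqP.
Qed.

Lemma crit : (c < r) <-> ((T + 1) ^+ 2 < rho ^+ 2 * (rho - 1)).
Proof.
have := key => k.
have c2 : 0 < c ^+ 2 by rewrite exprn_gt0.
have p2 : 0 < rho ^+ 2 by rewrite exprn_gt0.
have e : (c < r) = (rho ^+ 2 * c ^+ 2 < rho ^+ 2 * r ^+ 2).
  by rewrite ltr_pM2l // ltr_pXn2r // ?nnegrE ?ltW.
rewrite e k -[X in X < _]mulrC ltr_pM2l //.
have -> : rho ^+ 2 * (rho - 1) = rho ^+ 3 - rho ^+ 2 by ring.
split => h; lra.
Qed.

Lemma a_lt : (T + 1) ^+ 2 < rho ^+ 2 * (rho - 1) -> a < c.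
Proof.
move=> h; have := a3 => e.
rewrite ltNge; apply/negP => ca.
have h3 : c ^+ 3 <= a ^+ 3 by apply: lerXn2r => //; rewrite nnegrE ltW.
have r3 : 0 < rho ^+ 3 by rewrite exprn_gt0.
have c3 : 0 < c ^+ 3 by rewrite exprn_gt0.
have q : 0 < (rho ^+ 3 - (T + 1) ^+ 2) * c ^+ 3.
  apply: mulr_gt0 => //; rewrite subr_gt0.
  apply: lt_le_trans h _. have -> : rho ^+ 2 * (rho - 1) = rho ^+ 3 - rho ^+ 2 by ring.
  by rewrite lerBlDr lerDl exprn_ge0 // ltW.
have q2 : 0 <= rho ^+ 3 * (a ^+ 3 - c ^+ 3) by apply: mulr_ge0; [exact: ltW | rewrite subr_ge0].
have : rho ^+ 3 * a ^+ 3 - (T + 1) ^+ 2 * c ^+ 3 = 0 by rewrite e subrr.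
move: q q2; rewrite mulrBl mulrBr => q q2 e0.
lra.
Qed.

Lemma alg_all : (c < r <-> (T + 1) ^+ 2 < rho ^+ 2 * (rho - 1)) /\
  ((T + 1) ^+ 2 < rho ^+ 2 * (rho - 1) -> a < c).
Proof. split; [exact: crit | exact: a_lt]. Qed.
End A.


Section Misc.
Variable R : realType.

Lemma sum_gt0 n (F : 'I_n.+1 -> R) :
  \sum_(j < n.+1 | (0 < j)%N) F j = \sum_(j < n) F (lift ord0 j).
Proof.
rewrite big_mkcond big_ord_recl (_ : (0 < @ord0 n)%N = false) // Monoid.mul1m.
by apply: eq_bigr.
Qed.
Lemma sum_gt1 n (F : 'I_n.+2 -> R) :
  \sum_(j < n.+2 | (1 < j)%N) F j = \sum_(j < n) F (lift ord0 (lift ord0 j)).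
Proof.
rewrite big_mkcond big_ord_recl (_ : (1 < @ord0 n.+1)%N = false) // Monoid.mul1m.
rewrite big_ord_recl (_ : (1 < lift ord0 (@ord0 n))%N = false); last by []. rewrite Monoid.mul1m.
by apply: eq_bigr.
Qed.
Lemma sq_inj (x z : R) : 0 < x -> 0 < z -> x ^+ 2 = z ^+ 2 -> x = z.
Proof.
move=> hx hz e; have : (x - z) * (x + z) = 0 by rewrite -subr_sqr e subrr.
move/eqP; rewrite mulf_eq0 => /orP[|]; first by rewrite subr_eq0 => /eqP.
by rewrite gt_eqF // addr_gt0.
Qed.

Lemma r01 (rho c r0 r1 s T : R) : 0 < rho -> 0 < c -> 0 < r0 -> 0 < r1 -> 0 < s -> 0 <= T ->
  rho * r0 ^+ 2 = c * r1 + r1 * s * T -> rho * r1 ^+ 2 = c * r0 + r0 * s * T -> r0 = r1.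
Proof.
move=> hp hc h0 h1 hs hT e0 e1.
have h : (r0 - r1) * (rho * (r0 + r1) + c + s * T) = 0.
  have -> : (r0 - r1) * (rho * (r0 + r1) + c + s * T) =
    (rho * r0 ^+ 2 - (c * r1 + r1 * s * T)) - (rho * r1 ^+ 2 - (c * r0 + r0 * s * T)) by ring.
  by rewrite e0 e1 !subrr.
move/eqP: h; rewrite mulf_eq0 => /orP[|/eqP h]; first by rewrite subr_eq0 => /eqP.
have : 0 < rho * (r0 + r1) + c + s * T.
  have : 0 <= s * T by rewrite mulr_ge0 // ltW.
  have : 0 < rho * (r0 + r1) by rewrite mulr_gt0 // addr_gt0.
  lra.
by rewrite h ltxx.
Qed.

Lemma sq_crit (rho T : R) : 0 < rho -> 1 <= T ->
  (T < rho * Num.sqrt (rho - 1) - 1 <-> (T + 1) ^+ 2 < rho ^+ 2 * (rho - 1)).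
Proof.
move=> hp hT; case: (lerP (rho - 1) 0) => h.
  rewrite ler0_sqrtr // mulr0 sub0r; split => h'; first lra.
  have : rho ^+ 2 * (rho - 1) <= 0 by rewrite pmulr_rle0 // exprn_gt0.
  have : 0 < (T + 1) ^+ 2 by rewrite exprn_gt0 //; lra.
  lra.
have q0 : 0 <= rho * Num.sqrt (rho - 1) by rewrite mulr_ge0 ?sqrtr_ge0 // ltW.
have -> : rho ^+ 2 * (rho - 1) = (rho * Num.sqrt (rho - 1)) ^+ 2 by rewrite exprMn sqr_sqrtr // ltW.
rewrite ltr_pXn2r ?nnegrE //; last lra.
split => h'; lra.
Qed.
End Misc.

Unset Implicit Arguments. Set Strict Implicit.

Theorem lemma4p1 (R : realType) (t : nat) (rho : R) (y : bowtie_vertex t -> R) :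
  (1 <= t)%N ->
  principal_eigenpair 3 (bowtie_edges t) rho y ->
  (spectral_rank1 y = [set br (@ord0 t.+1); br (inord 1)] <->
   t%:R < rho * Num.sqrt (rho - 1) - 1).
Proof.
move=> t1 [pos _ Heig].
have H : forall i, rho * y i ^+ 2 =
  \sum_(e in bowtie_edges t | i \in e) \prod_(v in e | v != i) y v := Heig.
pose o1 : 'I_t.+2 := inord 1.
pose o2 : 'I_t.+2 := inord 2.
have ho1 : (0 < o1)%N by rewrite /o1 inordK.
have ho2 : (1 < o2)%N by rewrite /o2 inordK.
have hrho : 0 < rho.
  have := eq_rk H ho2; have : 0 < y (br ord0) * y (br (inord 1)) by rewrite mulr_gt0.
  by move=> p e; move: p; rewrite -e pmulr_lgt0 // exprn_gt0.
have Hl : forall j : 'I_t.+2, (0 < j)%N -> y (bl j) = y (bl o1).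
  move=> j hj; apply: sq_inj => //; apply: (mulfI (x := rho)); first by rewrite gt_eqF.
  by rewrite !eq_l.
have Hr : forall j : 'I_t.+2, (1 < j)%N -> y (br j) = y (br o2).
  move=> j hj; apply: sq_inj => //; apply: (mulfI (x := rho)); first by rewrite gt_eqF.
  by rewrite !eq_rk.
have S0 : forall x, \sum_(j < t.+2 | (0 < j)%N) x * y (bl j) = x * y (bl o1) * (t%:R + 1).
  move=> x; rewrite (eq_bigr (fun=> x * y (bl o1))); last by move=> j hj; rewrite Hl.
  by rewrite sum_gt0 sumr_const card_ord natr1 mulr_natr.
have S1 : forall x, \sum_(j < t.+2 | (1 < j)%N) x * y (br j) = x * y (br o2) * t%:R.
  move=> x; rewrite (eq_bigr (fun=> x * y (br o2))); last by move=> j hj; rewrite Hr.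
  by rewrite sum_gt1 sumr_const card_ord mulr_natr.
have Hc := eq_c H; rewrite S0 in Hc.
have Ha := eq_a H; rewrite S0 in Ha.
have Hr0 := eq_r0 H; rewrite S1 in Hr0.
have Hr1 := eq_r1 H; rewrite S1 in Hr1.
have hT : 1 <= (t%:R : R) by rewrite ler1n.
have E01 : y (br ord0) = y (br o1).
  by apply: (r01 hrho _ _ _ _ _ Hr0 Hr1) => //; lra.
rewrite -/o1 -E01 in Hc Hr0.
have Hm := eq_l H ho1.
have Hs := eq_rk H ho2; rewrite -/o1 -E01 in Hs.
have [A1 A2] := alg_all (pos _) (pos _) (pos _) (pos _) hrho Hm Hc Ha.
have SC := sq_crit hrho hT.
split.
  move=> Hset; apply/SC/A1.
  have nc : bc t \notin spectral_rank1 y by rewrite Hset !inE.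
  have r0in : br ord0 \in spectral_rank1 y by rewrite Hset !inE eqxx.
  move: nc r0in; rewrite !inE negb_forall => /existsP[w hw] /forallP /(_ w) hw2.
  rewrite -ltNge in hw; exact: lt_le_trans hw hw2.
move=> /SC hcrit.
have cr := proj2 A1 hcrit.
have ac := A2 hcrit.
have rho1 : 1 < rho.
  rewrite ltNge; apply/negP => h.
  have : rho ^+ 2 * (rho - 1) <= 0 by rewrite pmulr_rle0 ?exprn_gt0 // subr_le0.
  have : 0 < (t%:R + 1) ^+ 2 :> R by apply: exprn_gt0; lra.
  lra.
have sq_lt : forall x z, 0 < x -> 0 < z -> rho * x ^+ 2 <= z ^+ 2 -> x < z.
  move=> x z hx hz h; rewrite -(ltr_pXn2r (n:=2)) ?nnegrE ?ltW //.
  have : 0 < (rho - 1) * x ^+ 2 by rewrite mulr_gt0 ?exprn_gt0 // subr_gt0.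
  move: h; rewrite mulrBl mul1r; lra.
have car : y (bc t) * y (bl ord0) <= y (br ord0) ^+ 2.
  by rewrite expr2 ltW // ltr_pM // ?ltW //; apply: lt_trans cr.
have lt : forall w, w != br ord0 -> w != br (inord 1) -> y w < y (br ord0).
  case => [[j|j]|] hw0 hw1 /=.
  - have [j0|jpos] := posnP j.
      have -> : j = ord0 by apply: val_inj.
      exact: lt_trans ac cr.
    by apply: sq_lt => //; rewrite (eq_l H jpos).
  - have hj : (1 < j)%N.
      move: hw0 hw1; rewrite /br !veqE -!val_eqE /= inordK //.
      by case: (nat_of_ord j) => [|[|]].
    by apply: sq_lt => //; rewrite (eq_rk H hj) -E01 expr2.
  - exact: cr.
apply/setP => v; rewrite !inE.
case: (boolP ((v == br ord0) || (v == br (inord 1)))) => hv.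
  have -> : y v = y (br ord0) by case/orP: hv => /eqP ->.
  apply/forallP => w.
  case: (boolP ((w == br ord0) || (w == br (inord 1)))) => hw.
    by case/orP: hw => /eqP ->; rewrite ?E01.
  by move: hw; rewrite negb_or => /andP[h1 h2]; apply/ltW/lt.
apply/negbTE/negP => /forallP /(_ (br ord0)).
by move: hv; rewrite negb_or => /andP[h1 h2]; rewrite lt_geF // lt.
Qed.
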